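(* Let $m,n\ge0$. The elements $R(I,J)$ with $(I,J)\in X^{\pm}(m,n)$ span the ring $U^{\pm}_{m,n}$ as a $\mathbb Z$-module.
   Context: $U^{\pm}_{m,n}$ is the commutative ring generated over $\mathbb Z$ by $u_1,u_2,\dots$, $v_1,v_2,\dots$ and $t$ (with $u_0=v_0=1$, $u_i=v_i=0$ for $i<0$) subject to $R_I(w)=0$ for all $I\in\mathbb Z^{m+1}$, where $w_i=u_i-tv_{-i-m+n}$ and, for $I=(i_1,\dots,i_p)\in\mathbb Z^p$, $R_I(w)=\det(w_{i_\alpha+\beta-1})_{1\le\alpha,\beta\le p}$ ($R_\emptyset=1$); write $|I|=p$. In $U^{\pm}_{m,n}$ the element $t$ is invertible. For $I\in\mathbb Z^p$ and $J=(j_1,\dots,j_q)$ integers with $j_1,\dots,j_{q-1}\ge0$ and $j_q$ arbitrary, $R(I,J)=R_I(w)u_1^{j_1}\cdots u_{q-1}^{j_{q-1}}t^{j_q}$. $X^{\pm}(m,n)$ is the set of such pairs $(I,J)$ with $I$ strictly decreasing, $|I|\le m$, $|J|\le n$, $|I|-|J|=m-n$. *)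

(* Defs.v *)
From HB Require Import structures.
From mathcomp Require Import all_boot all_order all_algebra.
Set Implicit Arguments. Unset Strict Implicit. Unset Printing Implicit Defensive.
Import Order.TTheory GRing.Theory Num.Theory.
Local Open Scope ring_scope.

Section UDefs.
Variable A : comUnitRingType.

(* Extension of a generator family g (g k = the generator x_k for k >= 1;
   g 0 is never used) to all integer indices: x_0 = 1, x_i = 0 for i < 0. *)
Definition ext (g : nat -> A) (i : int) : A :=
  match i with
  | Posz k => if k == 0%N then 1 else g k
  | Negz _ => 0
  end.

Definition wseq (m n : nat) (u v : nat -> A) (t : A) (i : int) : A :=
  ext u i - t * ext v (- i - m%:Z + n%:Z).

(* R_I(w) = det (w_{i_alpha + beta - 1})_{1 <= alpha, beta <= p}, p = |I|;
   with 0-based alpha, beta this is w_{i_alpha + beta}. R_[::] = 1. *)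
Definition RI (w : int -> A) (I : seq int) : A :=
  \det (\matrix_(a < size I, b < size I) w (nth 0 I a + b%:Z)).

Definition RIJ (m n : nat) (u v : nat -> A) (t : A) (I J : seq int) : A :=
  RI (wseq m n u v t) I
  * (\prod_(k < (size J).-1) (u k.+1) ^ (nth 0 J k))
  * (if J is [::] then 1 else t ^ (last 0 J)).

End UDefs.

Definition admissibleJ (J : seq int) : Prop :=
  forall k : nat, (k < (size J).-1)%N -> 0 <= nth 0 J k.

Definition inX (m n : nat) (I J : seq int) : Prop :=
  [/\ sorted (fun a b : int => b < a) I, (size I <= m)%N, (size J <= n)%N,
      admissibleJ J & (size I)%:Z - (size J)%:Z = m%:Z - n%:Z].

Definition generated_by (A : comUnitRingType) (u v : nat -> A) (t : A) : Prop :=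
  forall S : A -> Prop,
    S 1 -> (forall a b, S a -> S b -> S (a - b)) ->
    (forall a b, S a -> S b -> S (a * b)) ->
    (forall k, (0 < k)%N -> S (u k)) -> (forall k, (0 < k)%N -> S (v k)) ->
    S t -> S t^-1 -> forall x, S x.

(* Main.v *)
Require Import Defs.
From HB Require Import structures.
From mathcomp Require Import all_boot all_order all_algebra all_fingroup.
From mathcomp Require Import ring zify.
Import Order.TTheory GRing.Theory Num.Theory.
Local Open Scope ring_scope.

Section Det.
Context {R : comUnitRingType}.
Variable w : int -> R.

Definition Dm {p} (rf cf : 'I_p -> int) : R := \det (\matrix_(a < p, j < p) w (rf a + cf j)).
Definition idc {p} : 'I_p -> int := fun j => (j : nat)%:Z.

Lemma RI_Dm (s : seq int) p (e : size s = p) :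
  RI w s = Dm (fun a : 'I_p => nth 0 s a) (@idc p).
Proof. by subst p. Qed.

Lemma eq_Dm p (rf1 cf1 rf2 cf2 : 'I_p -> int) :
  (forall a j, rf1 a + cf1 j = rf2 a + cf2 j) -> Dm rf1 cf1 = Dm rf2 cf2.
Proof. by move=> H; rewrite /Dm; congr (\det _); apply/matrixP=> a j; rewrite !mxE H. Qed.

Lemma Dm_perm p (s : 'S_p) rf cf :
  Dm (fun a => rf (s a)) cf = (-1) ^+ s * Dm rf cf.
Proof.
rewrite /Dm.
have -> : \matrix_(a < p, j < p) w (rf (s a) + cf j)
   = row_perm s (\matrix_(a < p, j < p) w (rf a + cf j)).
  by apply/matrixP=> a j; rewrite !mxE.
by rewrite row_permE det_mulmx det_perm.
Qed.

Lemma Dm_eq0 p rf cf (a1 a2 : 'I_p) : a1 != a2 -> rf a1 = rf a2 -> Dm rf cf = 0.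
Proof.
move=> ne E; rewrite /Dm; apply: (determinant_alternate ne) => j.
by rewrite !mxE E.
Qed.

Lemma Dm_col_eq0 p rf cf (j1 j2 : 'I_p) : j1 != j2 -> cf j1 = cf j2 -> Dm rf cf = 0.
Proof.
move=> ne E; rewrite /Dm -det_tr; apply: (determinant_alternate ne) => a.
by rewrite !mxE E.
Qed.

Lemma Dm0 (rf cf : 'I_0 -> int) : Dm rf cf = 1.
Proof. by rewrite /Dm det_mx00. Qed.

Lemma Dm1 (rf cf : 'I_1 -> int) : Dm rf cf = w (rf 0 + cf 0).
Proof. by rewrite /Dm det_mx11 mxE. Qed.

Definition cnt {p} (e : {ffun 'I_p -> bool}) : nat := (\sum_(i < p) (e i : nat))%N.
Definition shiftf {p} (f : 'I_p -> int) (e : {ffun 'I_p -> bool}) : 'I_p -> int :=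
  fun i => f i + ((e i : nat) : int).

Lemma G p rf cf k :
  \sum_(e : {ffun 'I_p -> bool} | cnt e == k) Dm (shiftf rf e) cf =
  \sum_(e : {ffun 'I_p -> bool} | cnt e == k) Dm rf (shiftf cf e).
Proof.
rewrite /Dm /determinant.
rewrite exchange_big [RHS]exchange_big.
apply: eq_bigr => s _ /=.
rewrite -!big_distrr /=; congr (_ * _).
pose h (e : {ffun 'I_p -> bool}) : {ffun 'I_p -> bool} := [ffun i => e (s i)].
have hinj : injective h.
  move=> e1 e2 /ffunP E; apply/ffunP => j.
  have := E (s^-1 j)%g; rewrite !ffunE permKV; done.
have ch : forall e, cnt (h e) = cnt e.
  move=> e; rewrite /cnt [in RHS](reindex_inj (@perm_inj _ s)).
  by apply: eq_bigr => i _; rewrite ffunE.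
rewrite (reindex_inj hinj) /=.
apply: eq_big => e; first by rewrite ch.
move=> _; apply: eq_bigr => i _; rewrite !mxE /shiftf ffunE.
by congr (w _); ring.
Qed.

Lemma sum_le_ord p j : (\sum_(i < p) ((j <= i)%N : nat))%N = (p - j)%N.
Proof.
elim: p => [|p IH]; first by rewrite big_ord0.
rewrite big_ord_recr /= IH; case: (leqP j p) => H /=; lia.
Qed.

Lemma mono_ext p (e : {ffun 'I_p -> bool}) :
  (forall l l' : 'I_p, val l' = (val l).+1 -> e l -> e l') ->
  forall i j : 'I_p, (i <= j)%N -> e i -> e j.
Proof.
move=> H i j; move Hd: (j - i)%N => dd.
elim: dd j Hd => [|dd IH] j Hd Hij ei.
  have -> : j = i by apply/val_inj/eqP; rewrite eqn_leq Hij /=; lia.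
  done.
have Hj1 : (j.-1 < p)%N by have := ltn_ord j; lia.
apply: (H (Ordinal Hj1)) => /=; first lia.
apply: (IH (Ordinal Hj1)) => //=; lia.
Qed.

Lemma L3 p rf k : (k <= p)%N ->
  \sum_(e : {ffun 'I_p -> bool} | cnt e == k) Dm rf (shiftf (@idc p) e) =
  Dm rf (fun j : 'I_p => (bump (p - k) j : nat)%:Z).
Proof.
move=> kp.
pose e0 : {ffun 'I_p -> bool} := [ffun j : 'I_p => (p - k <= j)%N].
have ce0 : cnt e0 = k.
  rewrite /cnt (eq_bigr (fun i : 'I_p => ((p - k <= i)%N : nat))); last by move=> i _; rewrite ffunE.
  by rewrite sum_le_ord; lia.
rewrite (bigD1 e0) ?ce0 //= big1 ?addr0.
  apply: eq_Dm => a j; rewrite /shiftf /idc ffunE /bump; congr (_ + _).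
  by rewrite -PoszD addnC.
move=> e /andP [/eqP ce ne].
case: (boolP [exists l : 'I_p, exists l' : 'I_p, (val l' == (val l).+1) && e l && ~~ e l']).
  move=> /existsP [l /existsP [l' /andP [/andP [/eqP Hl el] nel]]].
  apply: (@Dm_col_eq0 p rf (shiftf idc e) l l').
    by apply/eqP => E; move: Hl; rewrite E; lia.
  rewrite /shiftf /idc el (negbTE nel) Hl /=; rewrite -PoszD; congr Posz; lia.
move=> /existsPn Hn; exfalso; move/eqP: ne; apply.
have mono : forall i j : 'I_p, (i <= j)%N -> e i -> e j.
  apply: mono_ext => l l' Hl el.
  have := Hn l => /existsPn /(_ l'); rewrite Hl eqxx el /=; by case: (e l').
apply/ffunP => j; rewrite ffunE.
case: (boolP (e j)) => ej.
  have : (p - j <= cnt e)%N.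
    rewrite -sum_le_ord /cnt; apply: leq_sum => i _.
    case: (leqP j i) => //= Hji; by rewrite (mono j i Hji ej).
  by rewrite ce => H; apply/esym; apply/idP; have := ltn_ord j; lia.
have : (cnt e <= p - j.+1)%N.
  rewrite -sum_le_ord /cnt; apply: leq_sum => i _.
  case: (boolP (e i)) => ei //=.
  case: (leqP j.+1 i) => // Hij.
  by move: ej; rewrite (mono i j _ ei) //; lia.
by rewrite ce => H; apply/esym/negbTE; have := ltn_ord j; lia.
Qed.

Definition extr {p} (rf : 'I_p -> int) (r : int) : 'I_p.+1 -> int :=
  fun a => if unlift ord_max a is Some a' then rf a' else r.

Lemma REL p rf r : Dm (extr rf r) (@idc p.+1) =
  \sum_(b < p.+1) (-1) ^+ (p + b) * w (r + (b : nat)%:Z) * Dm rf (fun j : 'I_p => (bump b j : nat)%:Z).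
Proof.
rewrite /Dm (expand_det_row _ ord_max); apply: eq_bigr => b _.
rewrite /cofactor mxE /extr unlift_none /= mulrCA mulrA; congr (_ * \det _).
by apply/matrixP => a j; rewrite !mxE liftK.
Qed.

Lemma Dcol_last p rf : Dm rf (fun j : 'I_p => (bump p j : nat)%:Z) = Dm rf (@idc p).
Proof. by apply: eq_Dm => a j; rewrite /bump leqNgt ltn_ord. Qed.

Lemma Dcol_first p rf : Dm rf (fun j : 'I_p => (bump 0 j : nat)%:Z) = Dm (fun a => rf a + 1) (@idc p).
Proof. by apply: eq_Dm => a j; rewrite /bump /idc /=; rewrite -addn1 PoszD; ring. Qed.

Lemma Dcol_sum p rf (b : nat) : (b <= p)%N ->
  Dm rf (fun j : 'I_p => (bump b j : nat)%:Z) =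
  \sum_(e : {ffun 'I_p -> bool} | cnt e == (p - b)%N) Dm (shiftf rf e) (@idc p).
Proof. by move=> bp; rewrite G L3 ?leq_subr // subKn. Qed.

End Det.

Section Main.
Variables (m n : nat) (A : comUnitRingType) (u v : nat -> A) (t : A).
Hypothesis ht : t \is a GRing.unit.
Hypothesis hR : forall I : seq int, size I = m.+1 -> RI (wseq m n u v t) I = 0.

Local Notation w := (wseq m n u v t).
Local Notation d := (n%:Z - m%:Z).

Lemma w_val x : w x = ext u x - t * ext v (d - x).
Proof. by rewrite /wseq; congr (_ - _ * ext v _); ring. Qed.

Lemma ext_neg (g : nat -> A) (i : int) : i < 0 -> ext g i = 0.
Proof. by case: i. Qed.
Lemma ext_pos (g : nat -> A) (k : nat) : (0 < k)%N -> ext g k = g k.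
Proof. by case: k. Qed.

Definition monq q (a : nat -> int) (e : int) : A :=
  (\prod_(k < q.-1) (u k.+1) ^ (a k)) * (if q is 0%N then 1 else t ^ e).
Definition mkJ q (a : nat -> int) (e : int) : seq int :=
  if q is q'.+1 then rcons (mkseq a q') e else [::].
Definition adm q (a : nat -> int) := forall k, (k < q.-1)%N -> 0 <= a k.
Definition insa q (a : nat -> int) : nat -> int := fun i => if i == q.-1 then 0 else a i.
Definition inse q (e : int) : int := if q is 0%N then 0 else e.
Definition upd (a : nat -> int) k : nat -> int := fun i => if i == k then a k + 1 else a i.

Lemma size_mkJ q a e : size (mkJ q a e) = q.
Proof. by case: q => //= q; rewrite size_rcons size_mkseq. Qed.

Lemma nth_mkJ q a e k : (k < q.-1)%N -> nth 0 (mkJ q a e) k = a k.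
Proof.
case: q => //= q kq; rewrite nth_rcons size_mkseq kq nth_mkseq //.
Qed.

Lemma RIJ_mk I q a e : RIJ m n u v t I (mkJ q a e) = RI w I * monq q a e.
Proof.
rewrite /RIJ /monq size_mkJ -mulrA; congr (_ * (_ * _)).
  by apply: eq_bigr => k _; rewrite nth_mkJ.
case: q => //= q.
by case: (mkseq a q) => [|y s] //=; rewrite last_rcons.
Qed.

Lemma inX_mk I q a e : sorted (fun a b : int => b < a) I -> (size I <= m)%N ->
  (size I + n = q + m)%N -> adm q a -> inX m n I (mkJ q a e).
Proof.
move=> so sm eq ad; split => //; rewrite ?size_mkJ //; try lia.
by move=> k; rewrite size_mkJ => kq; rewrite nth_mkJ // ad.
Qed.

Definition inM (x : A) := exists s : seq ((seq int * seq int) * int),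
  (forall p, p \in s -> inX m n p.1.1 p.1.2) /\
  x = \sum_(p <- s) (RIJ m n u v t p.1.1 p.1.2) *~ p.2.

Lemma inM0 : inM 0.
Proof. by exists [::]; rewrite big_nil. Qed.

Lemma inMD x y : inM x -> inM y -> inM (x + y).
Proof.
move=> [s [H1 ->]] [s' [H2 ->]]; exists (s ++ s'); split; last by rewrite big_cat.
by move=> p; rewrite mem_cat => /orP [/H1|/H2].
Qed.

Lemma inMN x : inM x -> inM (- x).
Proof.
move=> [s [H1 ->]]; exists [seq (p.1, - p.2) | p <- s]; split.
  by move=> p /mapP [q Hq ->]; exact: (H1 q Hq).
by rewrite big_map -sumrN; apply: eq_bigr => p _; rewrite mulrNz.
Qed.

Lemma inMB x y : inM x -> inM y -> inM (x - y).
Proof. by move=> hx hy; apply: inMD => //; apply: inMN. Qed.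

Lemma inM_sign k x : inM x -> inM ((-1) ^+ k * x).
Proof. by move=> hx; rewrite -signr_odd mulr_sign; case: (odd k) => //; apply: inMN. Qed.

Lemma inM_basic I J : inX m n I J -> inM (RIJ m n u v t I J).
Proof.
move=> h; exists [:: ((I, J), 1)]; split; first by move=> p; rewrite inE => /eqP ->.
by rewrite big_seq1.
Qed.

Lemma inM_sum (I : Type) (r : seq I) (P : pred I) (F : I -> A) :
  (forall i, P i -> inM (F i)) -> inM (\sum_(i <- r | P i) F i).
Proof. by move=> H; apply: (big_ind inM inM0 inMD). Qed.

Lemma Dm_map p (rf : 'I_p -> int) : Dm w rf idc = RI w [seq rf i | i <- enum 'I_p].
Proof.
rewrite (@RI_Dm _ w _ p) ?size_map ?size_enum_ord //.
apply: eq_Dm => a j; congr (_ + _).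
by rewrite (nth_map a) ?size_enum_ord // nth_ord_enum.
by rewrite -enumT size_enum_ord.
Qed.

Lemma nth_map_ord p (rf : 'I_p -> int) (k : 'I_p) : nth 0 [seq rf i | i <- enum 'I_p] k = rf k.
Proof. by rewrite (nth_map k) ?size_enum_ord // nth_ord_enum. Qed.

Lemma KL p q (rf : 'I_p -> int) a e : (p + n = q + m)%N -> (p <= m.+1)%N -> adm q a ->
  inM (Dm w rf idc * monq q a e).
Proof.
move=> Hpq Hpm Ha.
case: (ltngtP p m.+1) Hpm => // [Hpm _|Hpm _]; last first.
  subst p; rewrite Dm_map hR ?mul0r; first exact: inM0.
  by rewrite size_map size_enum_ord.
set l := [seq rf i | i <- enum 'I_p].
case: (boolP (uniq l)) => Hu; last first.
  move/(uniqPn 0): Hu => [i [j [ij jl E]]].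
  move: jl; rewrite size_map size_enum_ord => jp.
  have ip : (i < p)%N by lia.
  rewrite (@Dm_eq0 _ w p rf idc (Ordinal ip) (Ordinal jp)) ?mul0r; first exact: inM0.
    by rewrite -(inj_eq val_inj) /=; lia.
  have E1 := @nth_map_ord p rf (Ordinal ip); have E2 := @nth_map_ord p rf (Ordinal jp).
  simpl in E1, E2; by rewrite -E1 -E2.
set s := rev (sort <=%O l).
have Hperm : perm_eq s [tuple rf i | i < p].
  by rewrite /s perm_rev perm_sort /=.
case/tuple_permP: Hperm => sg Hs.
have Hsz : size s = p by rewrite Hs size_tuple.
have HR : RI w s = (-1) ^+ sg * Dm w rf idc.
  rewrite (@RI_Dm _ w _ _ Hsz) -Dm_perm; apply: eq_Dm => a0 j; congr (_ + _).
  by rewrite Hs -tnth_nth tnth_mktuple tnth_mktuple.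
have -> : Dm w rf idc * monq q a e = (-1) ^+ sg * RIJ m n u v t s (mkJ q a e).
  by rewrite RIJ_mk HR !mulrA -expr2 sqrr_sign mul1r.
apply: inM_sign; apply: inM_basic; apply: inX_mk => //; try by rewrite Hsz.
  rewrite /s rev_sorted.
  by have := sort_lt_sorted l; rewrite Hu.
Qed.


Lemma monq0 a e : monq 0 a e = 1.
Proof. by rewrite /monq big_ord0 mul1r. Qed.

Lemma monq1 a e : monq 1 a e = t ^ e.
Proof. by rewrite /monq big_ord0 mul1r. Qed.

Lemma mon_ins q a e : monq q a e = monq q.+1 (insa q a) (inse q e).
Proof.
case: q => [|q]; first by rewrite monq0 monq1 expr0z.
rewrite /monq /= big_ord_recr /= /insa eqxx expr0z mulr1; congr (_ * _).
apply: eq_bigr => k _ /=; case: eqP => // E.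
by have := ltn_ord k; rewrite E ltnn.
Qed.

Lemma adm_ins q a : adm q a -> adm q.+1 (insa q a).
Proof.
move=> Ha k /= kq; rewrite /insa; case: eqP => // E.
apply: Ha; case: q kq E => [|q] /=; lia.
Qed.

Lemma adm_upd q a k : adm q a -> 0 <= a k -> adm q (upd a k).
Proof.
move=> Ha Hk i iq; rewrite /upd; case: eqP => _; last exact: Ha.
by apply: addr_ge0.
Qed.

Lemma exprz_succ (x : A) (z : int) : 0 <= z -> x ^ z * x = x ^ (z + 1).
Proof.
case: z => // N _.
have -> : N%:Z + 1 = (N.+1)%:Z by lia.
by rewrite -!exprnP exprSr.
Qed.

Lemma bumpu q a e k : (k < q.-1)%N -> 0 <= a k ->
  monq q a e * u k.+1 = monq q (upd a k) e.
Proof.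
move=> kq ak; rewrite /monq mulrAC; congr (_ * _).
rewrite (bigD1 (Ordinal kq)) //= [X in _ = X](bigD1 (Ordinal kq)) //=.
rewrite mulrAC /upd eqxx exprz_succ //; congr (_ * _).
apply: eq_bigr => i Hi; case: eqP => // E.
by move: Hi; rewrite -(inj_eq val_inj) /= E eqxx.
Qed.

Lemma bumpt q a e : (0 < q)%N -> monq q a e * t = monq q a (e + 1).
Proof.
case: q => // q _; rewrite /monq -mulrA; congr (_ * _).
by rewrite exprzDr // expr1z.
Qed.

Lemma bumptV q a e : (0 < q)%N -> monq q a e * t^-1 = monq q a (e - 1).
Proof.
case: q => // q _; rewrite /monq -mulrA; congr (_ * _).
by rewrite exprzDr // exprN1.
Qed.

Lemma KLx p q (rf : 'I_p -> int) a e (c : A) : (p + n = q + m)%N -> (p <= m.+1)%N -> adm q a ->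
  (c = 0 \/ c = 1) -> inM (c * (Dm w rf idc * monq q a e)).
Proof.
move=> H1 H2 H3 [->|->]; first by rewrite mul0r; exact: inM0.
by rewrite mul1r; apply: KL.
Qed.

Lemma KLup p q (rf : 'I_p.+1 -> int) a e : (p + n = q + m)%N -> (p <= m)%N -> adm q a ->
  inM (Dm w rf idc * monq q a e).
Proof.
move=> H1 H2 H3; rewrite mon_ins; apply: KL; try lia.
exact: adm_ins.
Qed.

Lemma W0 q x a e (rf : 'I_0 -> int) : (n = q + m)%N -> adm q a ->
  inM (w x * (Dm w rf idc * monq q a e)).
Proof.
move=> H Ha; rewrite Dm0 mul1r.
have -> : w x = Dm w (fun _ : 'I_1 => x) idc by rewrite Dm1 addr0.
by apply: KLup => //; lia.
Qed.

Lemma Wp p q : (0 < p)%N -> (p + n = q + m)%N -> (p <= m)%N ->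
  forall x (rf : 'I_p -> int) a e, adm q a -> inM (w x * (Dm w rf idc * monq q a e)).
Proof.
move=> p0 Hpq Hpm.
pose lo : int := if q == 0%N then d + 1 else d.
pose hi : int := lo + p%:Z - 1.
pose P x := forall (rf : 'I_p -> int) a e, adm q a -> inM (w x * (Dm w rf idc * monq q a e)).
have Win : forall x, lo <= x -> x <= hi -> P x.
  move=> x H1 H2 rf a e Ha.
  rewrite w_val mulrBl; apply: inMB.
    case: x H1 H2 => [k|k] H1 H2; last first.
      by rewrite ext_neg // mul0r; exact: inM0.
    case: k H1 H2 => [|k] H1 H2.
      have -> : ext u 0 = 1 by [].
      by rewrite mul1r; apply: KL => //; lia.
    rewrite ext_pos //.
    have kq : (k < q.-1)%N.
      move: H2 H1; rewrite /hi /lo; case: eqP => Hq; [subst q|]; lia.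
    rewrite mulrCA [u _ * _]mulrC bumpu //; last exact: Ha.
    apply: KL => //; try lia; apply: adm_upd => //; exact: Ha.
  case: (ltgtP (d - x) 0) => Hz.
  - by rewrite ext_neg // mulr0 mul0r; exact: inM0.
  - by exfalso; move: H1 Hz; rewrite /lo; case: eqP => _; lia.
  - rewrite Hz.
    have -> : ext v 0 = 1 by [].
    have q0 : (0 < q)%N by move: H1 Hz; rewrite /lo; case: eqP => Hq; lia.
    rewrite mulr1 mulrCA [t * _]mulrC bumpt //.
    by apply: KL => //; lia.
have key : forall N : nat, forall x, x - hi <= N%:Z -> lo - x <= N%:Z -> P x.
  elim=> [|N IH] x H1 H2.
    by apply: Win; lia.
  case: (boolP (x <= hi)) => Hx1; case: (boolP (lo <= x)) => Hx2.
  - exact: Win.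
  - move=> rf a e Ha.
    have R1 := @REL _ w p (fun i => rf i - 1) x.
    rewrite big_ord_recl /= Dcol_first in R1.
    set S := \sum_(i < p) _ in R1.
    have E : w x * Dm w rf idc = (-1) ^+ p * (Dm w (extr (fun i => rf i - 1) x) idc - S).
      rewrite R1 addrK addn0 addr0 !mulrA -expr2 sqrr_sign mul1r.
      by congr (_ * _); apply: eq_Dm => i j; ring.
    rewrite mulrA E -mulrA; apply: inM_sign; rewrite mulrBl; apply: inMB.
      by apply: KLup.
    rewrite /S mulr_suml; apply: inM_sum => b _ /=.
    rewrite -!mulrA; apply: inM_sign.
    rewrite Dcol_sum; last by have := ltn_ord b; rewrite /bump /=; lia.
    rewrite mulr_suml mulr_sumr; apply: inM_sum => e0 _.
    apply: IH => //.
      have := ltn_ord b; rewrite /hi /bump /=; lia.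
    have := ltn_ord b; rewrite /bump /=; lia.
  - move=> rf a e Ha.
    have R1 := @REL _ w p rf (x - p%:Z).
    rewrite big_ord_recr /= Dcol_last subrK -signr_odd oddD addbb /= expr0 mul1r in R1.
    set S := \sum_(i < p) _ in R1.
    have E : w x * Dm w rf idc = Dm w (extr rf (x - p%:Z)) idc - S.
      by rewrite R1 addrC addrK.
    rewrite mulrA E mulrBl; apply: inMB; first by apply: KLup.
    rewrite /S mulr_suml; apply: inM_sum => b _ /=.
    rewrite -!mulrA; apply: inM_sign.
    rewrite Dcol_sum; last by have := ltn_ord b; lia.
    rewrite mulr_suml mulr_sumr; apply: inM_sum => e0 _.
    apply: IH => //.
      have := ltn_ord b; lia.
    have := ltn_ord b; move: Hx1; rewrite /hi; lia.
  - by exfalso; move: Hx1 Hx2; rewrite /hi; lia.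
move=> x; apply: (key (absz (x - hi) + absz (lo - x))%N); lia.
Qed.

Lemma inMZ x c : inM x -> inM (x *~ c).
Proof.
move=> [s [H1 ->]]; exists [seq (p.1, p.2 * c) | p <- s]; split.
  by move=> p /mapP [q Hq ->]; exact: (H1 q Hq).
by rewrite big_map mulrz_suml; apply: eq_bigr => p _; rewrite mulrzA.
Qed.

Lemma Q0 p (rf : 'I_p -> int) : (p + n = m)%N ->
  Dm w (extr rf d) idc = Dm w rf idc - (-1) ^+ p * t * Dm w (fun a => rf a + 1) idc.
Proof.
move=> Hp.
rewrite REL.
under eq_bigr => b _ do rewrite w_val mulrBr mulrBl.
rewrite sumrB; congr (_ - _).
  rewrite big_ord_recr /= big1 ?add0r.
    have -> : d + p%:Z = 0 by lia.
    have -> : ext u 0 = 1 by [].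
    by rewrite mulr1 Dcol_last -signr_odd oddD addbb /= expr0 mul1r.
  move=> b _; rewrite ext_neg ?mulr0 ?mul0r //.
  by have := ltn_ord b; rewrite /=; lia.
rewrite big_ord_recl /= big1 ?addr0.
  rewrite subrr.
  have -> : ext v 0 = 1 by [].
  by rewrite Dcol_first addn0 [t * 1]mulr1.
move=> b _; rewrite ext_neg ?mulr0 ?mul0r //.
by rewrite /bump /=; lia.
Qed.

Definition good (g : A) := forall y, inM y -> inM (g * y).
Definition bgood (g : A) := forall p q (rf : 'I_p -> int) a e,
  (p + n = q + m)%N -> (p <= m)%N -> adm q a -> inM (g * (Dm w rf idc * monq q a e)).

Lemma mkJ_eq J : mkJ (size J) (nth 0 J) (last 0 J) = J.
Proof.
case: J => // x s /=.
apply: (@eq_from_nth _ 0); first by rewrite size_rcons size_mkseq.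
move=> k; rewrite size_rcons size_mkseq => ks.
rewrite nth_rcons size_mkseq; case: ltngtP => Hk.
- by rewrite nth_mkseq.
- lia.
- by rewrite Hk; have := nth_last 0 (x :: s); rewrite /= => ->.
Qed.

Lemma bgood_good g : bgood g -> good g.
Proof.
move=> Hg y [s [Hs ->]].
elim: s Hs => [|[[I J] c] s IH] Hs.
  by rewrite big_nil mulr0; exact: inM0.
rewrite big_cons mulrDr; apply: inMD; last first.
  by apply: IH => p Hp; apply: Hs; rewrite inE Hp orbT.
rewrite mulrzAr; apply: inMZ.
move: (Hs ((I, J), c) (mem_head _ _)) => [Hso Hsm Hsn adJ hz].
rewrite /= in Hso Hsm Hsn adJ hz.
rewrite -(mkJ_eq J) RIJ_mk (@RI_Dm _ w _ _ (erefl (size I))).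
apply: Hg => //.
  set sI := size I in hz *; set sJ := size J in hz *.
  by move: hz; lia.
Qed.

Lemma good_mul g h : good g -> good h -> good (g * h).
Proof. by move=> Hg Hh y Hy; rewrite -mulrA; apply: Hg; apply: Hh. Qed.
Lemma good_sub g h : good g -> good h -> good (g - h).
Proof. by move=> Hg Hh y Hy; rewrite mulrBl; apply: inMB; [apply: Hg|apply: Hh]. Qed.
Lemma good_add g h : good g -> good h -> good (g + h).
Proof. by move=> Hg Hh y Hy; rewrite mulrDl; apply: inMD; [apply: Hg|apply: Hh]. Qed.
Lemma good1 : good 1.
Proof. by move=> y Hy; rewrite mul1r. Qed.
Lemma good0 : good 0.
Proof. by move=> y Hy; rewrite mul0r; exact: inM0. Qed.

Lemma good_w x : good (w x).
Proof.
apply: bgood_good => p q rf a e Hpq Hpm Ha.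
case: p rf Hpq Hpm => [|p] rf Hpq Hpm.
  by apply: W0.
by apply: Wp.
Qed.

Lemma good_t : good t.
Proof.
apply: bgood_good => p q rf a e Hpq Hpm Ha.
case: q Hpq Ha => [|q] Hpq Ha; last first.
  rewrite mulrCA [t * _]mulrC bumpt //; apply: KL => //; lia.
have := @Q0 p (fun i => rf i - 1) => /(_ Hpq) E.
have E2 : Dm w (fun a0 => rf a0 - 1 + 1) idc = Dm w rf idc.
  by apply: eq_Dm => i j; ring.
rewrite E2 in E.
have -> : t * (Dm w rf idc * monq 0 a e) = (-1) ^+ p *
   (Dm w (fun i => rf i - 1) idc * monq 0 a e - Dm w (extr (fun i => rf i - 1) d) idc * monq 0 a e).
  by rewrite -mulrBl E opprB addrC subrK !mulrA -expr2 sqrr_sign mul1r.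
apply: inM_sign; apply: inMB; first by apply: KL => //; lia.
by apply: KLup => //; lia.
Qed.

Lemma good_tV : good t^-1.
Proof.
apply: bgood_good => p q rf a e Hpq Hpm Ha.
case: q Hpq Ha => [|q] Hpq Ha; last first.
  rewrite mulrCA [t^-1 * _]mulrC bumptV //; apply: KL => //; lia.
have := @Q0 p rf => /(_ Hpq) E.
have -> : t^-1 * (Dm w rf idc * monq 0 a e) =
   Dm w (extr rf d) idc * monq 1 a (-1) + (-1) ^+ p * (Dm w (fun i => rf i + 1) idc * monq 0 a e).
  rewrite monq0 monq1 !mulr1 exprN1 E mulrBl.
  by rewrite [_ * t * _ * t^-1]mulrAC mulrK // subrK mulrC.
apply: inMD; first by apply: KL => //; lia.
by apply: inM_sign; apply: KL => //; lia.
Qed.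

Lemma good_u_small k : (0 < k)%N -> k%:Z < d -> good (u k).
Proof.
move=> k0 kd; apply: bgood_good => p q rf a e Hpq Hpm Ha.
have kq : (k.-1 < q.-1)%N by move: kd; lia.
rewrite mulrCA [u k * _]mulrC.
have -> : k = (k.-1).+1 by lia.
rewrite bumpu //; last exact: Ha.
apply: KL => //; try lia; apply: adm_upd => //; exact: Ha.
Qed.

Lemma good_u k : (0 < k)%N -> good (u k).
Proof.
move=> k0; case: (ltP (k%:Z) d) => kd; first exact: good_u_small.
have -> : u k = w k%:Z + t * ext v (d - k%:Z).
  by rewrite w_val ext_pos // subrK.
apply: good_add; first exact: good_w.
apply: good_mul; first exact: good_t.
case: (ltgtP (d - k%:Z) 0) => Hz.
- by rewrite ext_neg //; exact: good0.
- by exfalso; lia.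
- by rewrite Hz; exact: good1.
Qed.

Lemma good_v k : (0 < k)%N -> good (v k).
Proof.
move=> k0.
have -> : v k = t^-1 * (ext u (d - k%:Z) - w (d - k%:Z)).
  rewrite w_val opprB addrC subrK.
  have -> : d - (d - k%:Z) = k by ring.
  by rewrite ext_pos // mulKr.
apply: good_mul; first exact: good_tV.
apply: good_sub; last exact: good_w.
case: (ltgtP (d - k%:Z) 0) => Hz.
- by rewrite ext_neg //; exact: good0.
- case E: (d - k%:Z) Hz => [j|j] Hz //.
  rewrite ext_pos; last by lia.
  by apply: good_u_small; lia.
- by rewrite Hz; exact: good1.
Qed.

Lemma inM1 : inM 1.
Proof.
case: (leqP m n) => H.
  have := @KL 0 (n - m) (fun i => 0) (fun _ => 0) 0.
  rewrite Dm0 mul1r.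
  have -> : monq (n - m) (fun _ => 0) 0 = 1.
    rewrite /monq big1 ?mul1r; last by move=> i _; rewrite expr0z.
    by case: (n - m)%N => //; rewrite expr0z.
  by apply; [lia|lia|move=> k _].
have := @KL (m - n) 0 (fun i => - (i : nat)%:Z) (fun _ => 0) 0.
rewrite monq0 mulr1.
have -> : Dm w (fun i : 'I_(m - n) => - (i : nat)%:Z) idc = 1.
  rewrite /Dm -det_tr det_trig.
    apply: big1 => i _; rewrite !mxE addNr w_val.
    have -> : ext u 0 = 1 by [].
    by rewrite ext_neg ?mulr0 ?subr0 //; lia.
  apply/is_trig_mxP => i j ij; rewrite !mxE w_val.
  rewrite ext_neg; last by rewrite /idc; lia.
  by rewrite ext_neg ?mulr0 ?subr0 //; rewrite /idc; have := ltn_ord j; lia.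
by apply; [lia|lia|move=> k _].
Qed.

End Main.

Theorem mainTheorem16 (m n : nat) (A : comUnitRingType)
    (u v : nat -> A) (t : A) :
  t \is a GRing.unit ->
  (forall I : seq int, size I = m.+1 -> RI (wseq m n u v t) I = 0) ->
  generated_by u v t ->
  forall x : A, exists s : seq ((seq int * seq int) * int),
    (forall p, p \in s -> inX m n p.1.1 p.1.2) /\
    x = \sum_(p <- s) (RIJ m n u v t p.1.1 p.1.2) *~ p.2.
Proof.
move=> ht hR hgen x.
have hg : @good m n A u v t x.
  apply: (hgen (@good m n A u v t)).
  - exact: good1.
  - by move=> a b; apply: good_sub.
  - by move=> a b; apply: good_mul.
  - by move=> k k0; apply: good_u.
  - by move=> k k0; apply: good_v.
  - exact: good_t.
  - exact: good_tV.
by have := hg 1 (@inM1 m n A u v t ht hR); rewrite mulr1.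
Qed.
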